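(* Consider the SBBS with $d=2$ balls, error probability $\varepsilon\in[0,1]$ and any capacity $c\in\{1,2,\dots\}\cup\{\infty\}$, started with the two balls adjacent ($W_0=0$). Let $X$ be the bulk process, $X_0=0$, $X_{t+1}-X_t=\eta^{(2)}_t-\eta^{(1)}_t$. Then almost surely, for all $t\ge0$, $$W_t=X_t-\min_{0\le s\le t}X_s.$$
   Context: Stochastic box-ball system (SBBS). Fix an error probability $\varepsilon\in[0,1]$ and a capacity $c\in\{1,2,\dots\}\cup\{\infty\}$. A configuration is $\zeta\in\{0,1\}^{\mathbb N}$ with finitely many $1$'s (balls). The SBBS is driven as follows: at each time $t$ there are i.i.d. coins $\eta^{(1)}_t,\dots,\eta^{(d)}_t\sim\mathrm{Bernoulli}(1-\varepsilon)$ ($d$ = number of balls), independent over $t$. To produce $\zeta_{t+1}$ from $\zeta_t$, a carrier starts empty at site $1$ and scans sites $1,2,3,\dots$ in order: when it reaches the $i$-th ball (from the left) of $\zeta_t$ it picks it up iff $\eta_t^{(i)}=1$ and its current load is $<c$ (otherwise the ball stays); when it reaches an empty site while its load is $\ge1$, it drops one ball there (load decreases by $1$). The number $d$ of balls is conserved; with $d=2$ and ball positions $\zeta^{(1)}_t<\zeta^{(2)}_t$ the gap process is $W_t=\zeta^{(2)}_t-\zeta^{(1)}_t-1$. *)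

(* Defs.v *)
From HB Require Import structures.
From mathcomp Require Import all_boot all_order all_algebra.
From mathcomp Require Import all_classical all_reals all_analysis.
Set Implicit Arguments. Unset Strict Implicit. Unset Printing Implicit Defensive.
Import Order.TTheory GRing.Theory Num.Theory.

(* Capacity: [Some c] is a finite capacity c (c >= 1 assumed separately),
   [None] is capacity infinity. *)
Definition below_cap (cap : option nat) (l : nat) : bool :=
  if cap is Some c then (l < c)%N else true.

(* A configuration is the sorted list of ball positions (sites 1,2,3,...).
   [coin k] is the coin of the (k+1)-th ball from the left at this time step,
   i.e. [coin k] stands for eta^{(k+1)}.  [carrier cap s coin x] is the pair
   (load, number of balls met) after the carrier has scanned sites 1..x. *)
Fixpoint carrier (cap : option nat) (s : seq nat) (coin : nat -> bool) (x : nat)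
  : nat * nat :=
  match x with
  | 0 => (0, 0)%N
  | x'.+1 =>
      let: (l, k) := carrier cap s coin x' in
      if x \in s then
        (if coin k && below_cap cap l then (l.+1, k.+1) else (l, k.+1))
      else (if (0 < l)%N then (l.-1, k) else (l, k))
  end.

Definition occupied_after (cap : option nat) (s : seq nat) (coin : nat -> bool)
  (x : nat) : bool :=
  let: (l, k) := carrier cap s coin x.-1 in
  if x \in s then ~~ (coin k && below_cap cap l) else (0 < l)%N.

(* One step of the SBBS: scan sites 1 .. (max position + #balls + 1), which
   is enough for the carrier to drop all its balls. *)
Definition sbbs_step (cap : option nat) (s : seq nat) (coin : nat -> bool)
  : seq nat :=
  [seq x <- iota 1 (\max_(y <- s) y + size s + 1) | occupied_after cap s coin x].

(* The SBBS trajectory: [eta t i] is eta^{(i)}_t (i = 1..d). *)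
Fixpoint sbbs (cap : option nat) (zeta0 : seq nat) (eta : nat -> nat -> bool)
  (t : nat) : seq nat :=
  match t with
  | 0 => zeta0
  | t'.+1 => sbbs_step cap (sbbs cap zeta0 eta t') (fun k => eta t' k.+1)
  end.

Definition gap (s : seq nat) : int :=
  (nth 0 s 1)%:Z - (nth 0 s 0)%:Z - 1.

Definition bulk (eta : nat -> nat -> bool) (t : nat) : int :=
  (\sum_(s < t) ((eta s 2)%:Z - (eta s 1)%:Z))%R.

Definition running_min (X : nat -> int) (t : nat) : int :=
  \big[Num.min/X 0]_(s < t.+1) X s.

Local Open Scope ring_scope.
Local Open Scope classical_set_scope.

(* The coins eta^{(i)}_t, t >= 0, i in {1,2}, are random variables on the
   probability space, each Bernoulli(1-eps) (P(eta = 1) = 1 - eps), and they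
   are mutually independent (product rule for every finite subfamily). *)
Definition iid_bernoulli_coins (d : measure_display) (T : measurableType d)
  (R : realType) (P : probability T R) (eps : R)
  (eta : nat -> nat -> T -> bool) : Prop :=
  [/\ (forall t i, measurable [set w | eta t i w]),
      (forall t i, i \in [:: 1; 2]%N -> P [set w | eta t i w] = (1 - eps)%:E) &
      (forall (F : seq (nat * nat)) (b : nat * nat -> bool),
          uniq F -> all (fun p => p.2 \in [:: 1; 2]%N) F ->
          P [set w | forall p, p \in F -> eta p.1 p.2 w = b p] =
          (\prod_(p <- F) fine (P [set w | eta p.1 p.2 w = b p]))%:E)].

(* Main.v *)
Require Import Defs.
From HB Require Import structures.
From mathcomp Require Import all_boot all_order all_algebra.
From mathcomp Require Import all_classical all_reals all_analysis.
From mathcomp Require Import zify.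
Import Order.TTheory GRing.Theory Num.Theory.

Lemma carrierE cap (a b : nat) (coin : nat -> bool) x :
  (0 < a)%N -> (a < b)%N -> below_cap cap 0 ->
  let l0 := ((coin 0%N : nat) - (b.-1 - a))%N in
  let lb := (l0 + (coin 1%N && below_cap cap l0 : nat))%N in
  carrier cap [:: a; b] coin x =
  if (x < a)%N then (0, 0)%N else if (x < b)%N then (((coin 0%N : nat) - (x - a))%N, 1%N)
  else ((lb - (x - b))%N, 2%N).
Proof.
move=> a0 ab bc0 l0 lb; elim: x => [|x IH] /=; first by rewrite a0.
rewrite IH !inE /lb /l0.
case: (ltngtP x.+1 b) => xb.
- case: ifP => xa /=.
    rewrite bc0; case: (coin 0%N); repeat (case: ifP => /= ?); try congr pair; try lia.
  case: (coin 0%N); repeat (case: ifP => /= ?); try congr pair; try lia.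
- case: (below_cap cap _); case: (coin 0%N); case: (coin 1%N); repeat (case: ifP => /= ?); try congr pair; try lia.
- subst b; have -> : (x < a) = false by lia. rewrite ?ltnSn /= ?succnK.
  have -> : (x.+1 < a) = false by lia. rewrite orbT subnn subn0.
  case: (coin 0%N); (case: (coin 1%N) => /=; [case: (below_cap cap (_ - (x - a)))|]) => /=; try congr pair; try lia.
Qed.

Lemma filter2 (a' b' m n : nat) : (a' < b')%N ->
  [seq x <- iota m n | (x == a') || (x == b')] =
  (if (m <= a' < m + n)%N then [:: a'] else [::]) ++
  (if (m <= b' < m + n)%N then [:: b'] else [::]).
Proof.
move=> ab; elim: n m => [|n IH] m /=.
  rewrite addn0; have -> : (m <= a' < m)%N = false by lia.
  by have -> : (m <= b' < m)%N = false by lia.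
rewrite IH.
case: (eqVneq m a') => [->|ma] /=.
  have -> : (a'.+1 <= a')%N = false by lia.
  have -> : (a' <= a' < a' + n.+1)%N by lia.
  by have -> : (a' < b' < a'.+1 + n)%N = (a' <= b' < a' + n.+1)%N by lia.
case: (eqVneq m b') => [->|mb] /=.
  have -> : (b' < a' < b'.+1 + n)%N = false by lia.
  have -> : (b' <= a' < b' + n.+1)%N = false by lia.
  have -> : (b'.+1 <= b')%N = false by lia.
  by have -> : (b' <= b' < b' + n.+1)%N by lia.
have -> : (m < a' < m.+1 + n)%N = (m <= a' < m + n.+1)%N by lia.
by have -> : (m < b' < m.+1 + n)%N = (m <= b' < m + n.+1)%N by lia.
Qed.

Definition newa cap (a b : nat) (coin : nat -> bool) : nat :=
  if (a.+1 < b)%N then (a + coin 0%N)%N else if ~~ coin 0%N then a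
  else if coin 1%N && below_cap cap 1 then b.+1 else b.
Definition newb cap (a b : nat) (coin : nat -> bool) : nat :=
  if (a.+1 < b)%N then (b + coin 1%N)%N else if ~~ coin 0%N then (b + coin 1%N)%N
  else if coin 1%N && below_cap cap 1 then b.+2 else b.+1.

Lemma occE cap (a b : nat) (coin : nat -> bool) x :
  (0 < a)%N -> (a < b)%N -> below_cap cap 0 -> (0 < x)%N ->
  occupied_after cap [:: a; b] coin x =
  (x == newa cap a b coin) || (x == newb cap a b coin).
Proof.
move=> a0 ab bc0; case: x => // y _.
rewrite /occupied_after /= carrierE // !inE /newa /newb.
case: (ltngtP a.+1 b) => hb; [|lia|]; last first.
  subst b; rewrite succnK subnn subn0.
  case: ifP => ya; [|case: ifP => yb; first (have ey : y = a by lia); first (subst y; rewrite subnn)] => /=;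
  case: (coin 0%N); case: (coin 1%N); case: (below_cap cap 1);
  rewrite /= ?bc0; repeat (case: ifP => ? /=); try (apply/idP/idP => ?; lia).
have -> : ((coin 0%N : nat) - (b.-1 - a) = 0)%N by case: (coin 0%N) => /=; case: b hb {ab} => // b hb; rewrite succnK; lia.
rewrite ?hb ?bc0.
case: ifP => ya; [|case: ifP => yb] => /=;
case: (coin 0%N); case: (coin 1%N);
  rewrite /= ?bc0; repeat (case: ifP => ? /=);
  try (have e : (1 - (y - a) = 0)%N by lia); try (rewrite e bc0 /=); try (apply/idP/idP => ?; lia).
Qed.

Lemma stepE cap (a b : nat) (coin : nat -> bool) :
  (0 < a)%N -> (a < b)%N -> below_cap cap 0 ->
  sbbs_step cap [:: a; b] coin = [:: newa cap a b coin; newb cap a b coin].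
Proof.
move=> a0 ab bc0; rewrite /sbbs_step.
have -> : (\max_(y <- [:: a; b]) y = b)%N.
  by rewrite !big_cons big_nil maxn0; lia.
rewrite (@eq_in_filter _ (occupied_after cap [:: a; b] coin) (fun x => (x == newa cap a b coin) || (x == newb cap a b coin))); last first.
  move=> x; rewrite mem_iota => /andP[x1 _]; exact: occE.
rewrite filter2 /newa /newb; last first.
  by case: (ltnP a.+1 b) => h; case: (coin 0%N); case: (coin 1%N); case: (below_cap cap 1) => /=; lia.
case: (ltnP a.+1 b) => h; case: (coin 0%N); case: (coin 1%N); case: (below_cap cap 1) => /=;
  repeat (case: ifP => /= ?); try lia; done.
Qed.

Lemma newP cap (a b : nat) (coin : nat -> bool) :
  (0 < a)%N -> (a < b)%N ->
  [/\ (0 < newa cap a b coin)%N, (newa cap a b coin < newb cap a b coin)%N &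
   (newb cap a b coin - newa cap a b coin - 1 =
    if coin 0%N && ~~ coin 1%N then b - a - 1 - 1 else
    if ~~ coin 0%N && coin 1%N then b - a else b - a - 1)%N].
Proof.
move=> a0 ab; rewrite /newa /newb.
by case: (ltnP a.+1 b) => h; case: (coin 0%N); case: (coin 1%N); case: (below_cap cap 1) => /=; split; lia.
Qed.

Lemma rmin_S (X : nat -> int) t : running_min X t.+1 = Num.min (running_min X t) (X t.+1).
Proof.
rewrite /running_min -!(big_mkord xpredT) /index_iota !subn0 -(addn1 t.+1) iotaD.
rewrite big_cat_idem; last exact: minxx.
rewrite add0n (_ : iota t.+1 1 = [:: t.+1]) // big_seq1_id.
have key : forall (B y z : int), Num.min B z = B -> Num.min B (Num.min y z) = Num.min B y.
  by move=> B y z hB; rewrite minA [Num.min B y]minC -minA hB minC.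
apply: key.
exact: (big_id_idem (op := Order.min) (x := X 0) (minxx _) (iota 0 t.+1) xpredT X).
Qed.

Lemma rmin_0 (X : nat -> int) : running_min X 0 = X 0.
Proof. by rewrite /running_min -(big_mkord xpredT) /index_iota /= big_seq1_id minxx. Qed.

Local Open Scope ring_scope.
Lemma detE cap p (eta : nat -> nat -> bool) t :
  (forall c, cap = Some c -> (0 < c)%N) -> (0 < p)%N ->
  exists a b, sbbs cap [:: p; p.+1] eta t = [:: a; b] /\ (0 < a)%N /\ (a < b)%N /\
   ((b - a - 1)%N%:Z = bulk eta t - running_min (bulk eta) t).
Proof.
move=> hc p0; have bc0 : below_cap cap 0 by case: cap hc => //= c /(_ c erefl).
elim: t => [|t [a [b [E [a0 [ab IH]]]]]].
  exists p, p.+1; split=> //; split=> //; split=> //.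
  rewrite rmin_0 /bulk big_ord0 subrr; lia.
exists (newa cap a b (fun k => eta t k.+1)), (newb cap a b (fun k => eta t k.+1)).
rewrite /= E stepE //; have [n0 nab ->] := newP cap a b (fun k => eta t k.+1) a0 ab.
split=> //; split=> //; split=> //.
have -> : running_min (bulk eta) t.+1 = Num.min (running_min (bulk eta) t) (bulk eta t.+1).
  exact: rmin_S.
have -> : bulk eta t.+1 = bulk eta t + ((eta t 2)%:Z - (eta t 1)%:Z).
  by rewrite /bulk big_ord_recr.
move: IH; set X := bulk eta t; set m := running_min _ t.
rewrite minEle.
case: (eta t 1%N); case: (eta t 2%N) => /=; case: ifP => h; lia.
Qed.

Theorem mainTheorem10 (d : measure_display) (T : measurableType d)
  (R : realType) (P : probability T R) (eps : R)
  (cap : option nat) (eta : nat -> nat -> T -> bool) (p : nat) :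
  0 <= eps <= 1 ->
  (forall c, cap = Some c -> (0 < c)%N) ->
  iid_bernoulli_coins P eps eta ->
  (0 < p)%N ->
  {ae P, forall w, forall t : nat,
     gap (sbbs cap [:: p; p.+1] (fun s i => eta s i w) t) =
     bulk (fun s i => eta s i w) t - running_min (bulk (fun s i => eta s i w)) t}.
Proof.
move=> _ hc _ p0; apply: aeW => w t.
have [a [b [-> [a0 [ab <-]]]]] := detE cap p (fun s i => eta s i w) t hc p0.
rewrite /gap /=; lia.
Qed.
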